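(* Let $U\subset\mathbb{C}$ be open, let $\mu,a:U\to\mathbb{C}$ be holomorphic with $\mu\neq0$ and $|a|\neq1$ on $U$, and let $F(\theta;w)$ be the $\theta$-family of minimal surfaces defined by $a,\mu$. For $\theta\in\mathbb{R}$ and $w\in U$ set $$L_3(a)=\big(1+a\bar a,\;a+\bar a,\;-i(a-\bar a),\;-1+a\bar a\big),\qquad L_0(e^{i\theta}a)=\big(1+a\bar a,\;ae^{i\theta}+\bar ae^{-i\theta},\;-i(ae^{i\theta}-\bar ae^{-i\theta}),\;1-a\bar a\big),$$ (with $a=a(w)$), and $$\tau(\theta;a)=\frac{L_3(a)+L_0(e^{i\theta}a)}{\sqrt{-2\langle L_3(a),L_0(e^{i\theta}a)\rangle}},\qquad \nu(\theta;a)=\frac{L_3(a)-L_0(e^{i\theta}a)}{\sqrt{-2\langle L_3(a),L_0(e^{i\theta}a)\rangle}}.$$ Then $\tau(\theta;a(w))$ and $\nu(\theta;a(w))$ are the corresponding normal vectors of the surface $F(\theta;\cdot)$ at $w$ (an orthonormal basis of the normal plane, $\tau$ unit timelike, $\nu$ unit spacelike); the metric tensor of the surfaces of the family is $$\mathbf g(\theta;w)=4\mu(w)\overline{\mu(w)}\big(1-2a(w)\overline{a(w)}\cos\theta+(a(w)\overline{a(w)})^2\big)\,dw\,d\bar w;$$ and $\tau^3(\theta;w)\equiv0$ and $\nu^0(\theta;w)\equiv0$ for all $(\theta,w)\in\mathbb{R}\times U$.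
   Context: $\mathbb{R}^4_1$ has the Lorentz product $\langle x,y\rangle=-x^0y^0+x^1y^1+x^2y^2+x^3y^3$, extended complex-bilinearly to $\mathbb{C}^4$. For $a,b\in\mathbb{C}$ let $W(a,b)=(a+b,\;1+ab,\;i(1-ab),\;a-b)$. The $\theta$-family defined by holomorphic $\mu,a$ is $F(\theta;w)=P+2\operatorname{Re}\int_{w_0}^{w}\mu(\xi)W(a(\xi),e^{i\theta}a(\xi))\,d\xi$ for a fixed $P\in\mathbb{R}^4_1$ and $w_0\in U$ (assume $U$ simply connected so this is well defined); each $F(\theta;\cdot)$ is a minimal isothermal spacelike surface with $\partial_wF=\mu W(a,e^{i\theta}a)$. *)

(* Defs.v *)
From Stdlib Require Import Reals.
From Coquelicot Require Import Coquelicot.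
Open Scope R_scope.

(* vectors of C^4 / R^4 are represented as functions nat -> C / nat -> R;
   only the components 0,1,2,3 are relevant *)

Definition lorC (x y : nat -> C) : C :=
  (- (x 0%nat * y 0%nat) + x 1%nat * y 1%nat + x 2%nat * y 2%nat + x 3%nat * y 3%nat)%C.

Definition lorR (x y : nat -> R) : R :=
  - (x 0%nat * y 0%nat) + x 1%nat * y 1%nat + x 2%nat * y 2%nat + x 3%nat * y 3%nat.

Definition W (a b : C) : nat -> C := fun k =>
  match k with
  | 0%nat => (a + b)%C
  | 1%nat => (1 + a * b)%C
  | 2%nat => (Ci * (1 - a * b))%C
  | 3%nat => (a - b)%C
  | _ => 0%C
  end.

Definition eith (th : R) : C := (cos th, sin th).

Definition L3 (a : C) : nat -> C := fun k =>
  match k with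
  | 0%nat => (1 + a * Cconj a)%C
  | 1%nat => (a + Cconj a)%C
  | 2%nat => (- Ci * (a - Cconj a))%C
  | 3%nat => (-1 + a * Cconj a)%C
  | _ => 0%C
  end.

(* L_0(b) = (1 + b bbar, b + bbar, -i(b - bbar), 1 - b bbar); it is used with
   b = e^{i theta} a, for which b bbar = a abar *)
Definition L0 (b : C) : nat -> C := fun k =>
  match k with
  | 0%nat => (1 + b * Cconj b)%C
  | 1%nat => (b + Cconj b)%C
  | 2%nat => (- Ci * (b - Cconj b))%C
  | 3%nat => (1 - b * Cconj b)%C
  | _ => 0%C
  end.

Definition Q (th : R) (a : C) : C :=
  (- (RtoC 2) * lorC (L3 a) (L0 (eith th * a)))%C.

(* sqrt(-2 <L_3, L_0>), taken as the real square root of the real part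
   (the theorem asserts the quantity is real and positive) *)
Definition nf (th : R) (a : C) : R := sqrt (Re (Q th a)).

Definition tau (th : R) (a : C) : nat -> C := fun k =>
  ((L3 a k + L0 (eith th * a) k) / RtoC (nf th a))%C.

Definition nu (th : R) (a : C) : nat -> C := fun k =>
  ((L3 a k - L0 (eith th * a) k) / RtoC (nf th a))%C.

Definition Fx (F : C -> nat -> R) (w : C) : nat -> R :=
  fun k => Derive (fun x => F (x, Im w) k) (Re w).
Definition Fy (F : C -> nat -> R) (w : C) : nat -> R :=
  fun k => Derive (fun y => F (Re w, y) k) (Im w).

(* Main.v *)
Require Import Defs.
From Stdlib Require Import Reals Lra Lia Nsatz.
From Coquelicot Require Import Coquelicot.
Open Scope R_scope.

Ltac cunf := unfold Cdiv, Cminus, Cinv, Cmult, Cplus, Copp, Cconj, Ci, RtoC, Re, Im, eith in *; cbn [fst snd] in *.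


Lemma Cmult_pair a b c d : ((a,b)*(c,d))%C = (a*c-b*d, a*d+b*c).
Proof. reflexivity. Qed.
Lemma Cplus_pair a b c d : ((a,b)+(c,d))%C = (a+c, b+d).
Proof. reflexivity. Qed.
Lemma Cminus_pair a b c d : ((a,b)-(c,d))%C = (a-c, b-d).
Proof. reflexivity. Qed.
Lemma Copp_pair a b : (-(a,b))%C = (-a, -b).
Proof. reflexivity. Qed.
Lemma Cconj_pair a b : Cconj (a,b) = (a, -b).
Proof. reflexivity. Qed.
Lemma RtoC_pair a : RtoC a = (a, 0).
Proof. reflexivity. Qed.
Lemma Ci_pair : Ci = (0, 1).
Proof. reflexivity. Qed.
Lemma Re_pair a b : Re (a,b) = a.
Proof. reflexivity. Qed.
Lemma Im_pair a b : Im (a,b) = b.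
Proof. reflexivity. Qed.

Lemma Cdiv_pair a b c d : ((a,b)/(c,d))%C = (a*(c/(c*c+d*d)) - b*(-d/(c*c+d*d)), a*(-d/(c*c+d*d)) + b*(c/(c*c+d*d))).
Proof. replace (c*c+d*d) with (c^2+d^2) by ring. reflexivity. Qed.
Lemma HD_lemma p q u v : u*u+v*v = p*p+q*q -> p*p+q*q <> 1 ->
  0 < 1+(p*p+q*q)*(p*p+q*q) - 2*(p*u+q*v).
Proof.
  intros Hu Hr.
  assert (E : (p-u)*(p-u)+(q-v)*(q-v) = 2*(p*p+q*q) - 2*(p*u+q*v)) by nsatz.
  assert (0 < (p*p+q*q-1)*(p*p+q*q-1)).
  { assert (p*p+q*q-1 <> 0) by lra. pose proof (Rsqr_pos_lt _ H). unfold Rsqr in *. lra. }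
  pose proof (Rle_0_sqr (p-u)). pose proof (Rle_0_sqr (q-v)). unfold Rsqr in *.
  nra.
Qed.
Lemma lc2 a b c d L R k1 k2 : a = b -> c = d -> L - R = k1*(a-b) + k2*(c-d) -> L = R.
Proof. intros -> -> H. lra. Qed.
Ltac crunch := repeat progress (rewrite ?Cconj_pair, ?Cplus_pair, ?Cmult_pair, ?Cminus_pair, ?Copp_pair, ?RtoC_pair, ?Ci_pair, ?Cdiv_pair, ?Re_pair, ?Im_pair).


Theorem mainTheorem7 :
  forall (U : C -> Prop) (mu a : C -> C) (F : R -> C -> nat -> R),
    open U ->
    (forall z, U z -> ex_derive (K := C_AbsRing) (V := C_NormedModule) mu z) ->
    (forall z, U z -> ex_derive (K := C_AbsRing) (V := C_NormedModule) a z) ->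
    (forall z, U z -> mu z <> 0%C) ->
    (forall z, U z -> Cmod (a z) <> 1) ->
    (* F(theta; .) is the theta-family: real-valued with
       d_w F = mu W(a, e^{i theta} a), i.e. F_x = 2 Re(mu W), F_y = -2 Im(mu W) *)
    (forall (th : R) (z : C), U z -> forall k : nat, (k <= 3)%nat ->
       is_derive (fun x => F th (x, Im z) k) (Re z)
                 (2 * Re (mu z * W (a z) (eith th * a z) k)) /\
       is_derive (fun y => F th (Re z, y) k) (Im z)
                 (- 2 * Im (mu z * W (a z) (eith th * a z) k))) ->
    forall (th : R) (z : C), U z ->
      let t := tau th (a z) in
      let n := nu th (a z) in
      let tR := fun k => Re (t k) in
      let nR := fun k => Re (n k) in
      let X := Fx (F th) z in
      let Y := Fy (F th) z in
      (* -2 <L_3, L_0> is a positive real, so the square root is meaningful *)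
      (Im (Q th (a z)) = 0 /\ 0 < Re (Q th (a z))) /\
      (* tau, nu are real vectors *)
      (forall k : nat, (k <= 3)%nat -> Im (t k) = 0 /\ Im (n k) = 0) /\
      (* they are normal to the surface F(theta; .) at z *)
      (lorR tR X = 0 /\ lorR tR Y = 0 /\ lorR nR X = 0 /\ lorR nR Y = 0) /\
      (* orthonormal: tau unit timelike, nu unit spacelike *)
      (lorR tR tR = -1 /\ lorR nR nR = 1 /\ lorR tR nR = 0) /\
      (* metric tensor g = lambda dw dwbar with
         lambda = 4 mu mubar (1 - 2 a abar cos theta + (a abar)^2) *)
      (RtoC (lorR X X) =
         (4 * mu z * Cconj (mu z) *
          (1 - 2 * a z * Cconj (a z) * RtoC (cos th)
             + (a z * Cconj (a z)) * (a z * Cconj (a z))))%C /\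
       RtoC (lorR Y Y) =
         (4 * mu z * Cconj (mu z) *
          (1 - 2 * a z * Cconj (a z) * RtoC (cos th)
             + (a z * Cconj (a z)) * (a z * Cconj (a z))))%C /\
       lorR X Y = 0) /\
      (* tau^3 = 0 and nu^0 = 0 *)
      (t 3%nat = 0%C /\ n 0%nat = 0%C).
Proof.
  intros U mu a F _ _ _ _ Ha1 HF th z Hz t n tR nR X Y.
  assert (HX : forall k, (k <= 3)%nat -> X k = 2 * Re (mu z * W (a z) (eith th * a z) k)).
  { intros k Hk. apply is_derive_unique. apply (HF th z Hz k Hk). }
  assert (HY : forall k, (k <= 3)%nat -> Y k = - 2 * Im (mu z * W (a z) (eith th * a z) k)).
  { intros k Hk. apply is_derive_unique. apply (HF th z Hz k Hk). }
  assert (X0 := HX 0%nat ltac:(lia)). assert (X1 := HX 1%nat ltac:(lia)).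
  assert (X2 := HX 2%nat ltac:(lia)). assert (X3 := HX 3%nat ltac:(lia)).
  assert (Y0 := HY 0%nat ltac:(lia)). assert (Y1 := HY 1%nat ltac:(lia)).
  assert (Y2 := HY 2%nat ltac:(lia)). assert (Y3 := HY 3%nat ltac:(lia)).
  clear HX HY HF.
  specialize (Ha1 z Hz).

  unfold lorR, tR, nR, t, n, tau, nu, nf.
  rewrite X0, X1, X2, X3, Y0, Y1, Y2, Y3. clear X0 X1 X2 X3 Y0 Y1 Y2 Y3.
  clearbody X Y.
  destruct (a z) as [p q]. destruct (mu z) as [m1 m2].
  unfold Q, lorC, L3, L0, W, eith in *.
  pose proof (sin2_cos2 th) as Hcs. revert Hcs. generalize (cos th) (sin th). intros c s Hcs.
  rewrite !Cmult_pair.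
  assert (Hu : (c*p - s*q)*(c*p - s*q) + (c*q + s*p)*(c*q + s*p) = p*p+q*q) by (transitivity ((p*p+q*q)*(s*s+c*c)); [ring| unfold Rsqr in Hcs; replace (s*s+c*c) with 1 by (rewrite <- Hcs; ring); ring]).
  assert (Hv : p*(c*p - s*q) + q*(c*q + s*p) = (p*p+q*q)*c) by ring.
  revert Hu Hv. generalize (c*p - s*q) (c*q+s*p). intros u v Hu Hv. clear Hcs.
  unfold Cmod in Ha1; cbn [fst snd] in Ha1.
  assert (Hr : p*p+q*q <> 1).
  { intro E. apply Ha1. replace (p^2+q^2) with 1 by (rewrite <- E; ring). apply sqrt_1. }
  clear Ha1.
  crunch.
  match goal with |- context [sqrt ?e] =>
    assert (HQe : e = 4*(1+(p*p+q*q)*(p*p+q*q) - 2*(p*u+q*v))) by nsatz;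
    rewrite HQe
  end.
  assert (HD := HD_lemma p q u v Hu Hr).
  set (D := 1+(p*p+q*q)*(p*p+q*q) - 2*(p*u+q*v)) in *.
  set (N := sqrt (4*D)).
  assert (HN : 0 < N) by (apply sqrt_lt_R0; lra).
  assert (HNN : N*N = 4*D) by (apply sqrt_sqrt; lra).
  assert (HK0 : -0/(N*N+0*0) = 0) by (unfold Rdiv; ring).
  rewrite HK0.
  remember (N/(N*N+0*0)) as K eqn:HKdef.
  assert (HK : K*K*(4*D) = 1) .
  { rewrite HKdef. replace (N*N+0*0) with (4*D) by (rewrite <- HNN; ring). unfold Rdiv.
    replace (N * /(4*D) * (N * /(4*D)) * (4*D)) with ((N*N) * /(4*D)) by (field; lra).
    rewrite HNN. field. lra. }
  assert (HDdef : D = 1+(p*p+q*q)*(p*p+q*q) - 2*(p*u+q*v)) by reflexivity.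
  clearbody N. clearbody D.
  split; [split; [nsatz| lra]|].
  split; [intros k Hk; destruct k as [|[|[|[|k]]]]; [..|lia]; cbn iota; crunch; rewrite ?HK0, <- ?HKdef; split; unfold Rdiv; ring|].
  crunch; rewrite ?HK0, <- ?HKdef; clear HKdef HK0 HQe.
  split; [repeat split; ring|].
  rewrite HDdef in HK.
  split; [split; [|split]|].
  { apply (lc2 _ _ _ _ _ _ (-4*(p*p+q*q)*K*K) (-1) Hu HK); ring. }
  { apply (lc2 _ _ _ _ _ _ (4*(p*p+q*q)*K*K) 1 Hu HK); ring. }
  { ring. }
  split; [split; [|split]|].
  { f_equal. apply (lc2 _ _ _ _ _ _ (4*(m1*m1+m2*m2)*(p*p+q*q)) (-8*(m1*m1+m2*m2)) Hu Hv); ring. ring. }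
  { f_equal. apply (lc2 _ _ _ _ _ _ (4*(m1*m1+m2*m2)*(p*p+q*q)) (-8*(m1*m1+m2*m2)) Hu Hv); ring. ring. }
  { ring. }
  split; f_equal; first [ring | apply (lc2 _ _ _ _ _ _ (-K) 0 Hu Hu); ring].
Qed.
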